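(* Let $R$ be an associative ring with identity and involution $*$, and let $a\in R^{\#}\cap R^{\dagger}$. Then $a\in R^{SEP}$ if and only if $a(a^{\#})^*a^{\dagger}$ is a right $a$-idempotent, i.e. $(a(a^{\#})^*a^{\dagger})^2=a(a^{\#})^*a^{\dagger}a$.
   Context: An involution on $R$ is a map $x\mapsto x^*$ with $(x^* )^*=x$, $(x+y)^*=x^*+y^*$, $(xy)^*=y^*x^*$. An element $a$ is Moore–Penrose invertible if there is $b$ with $aba=a$, $bab=b$, $(ab)^*=ab$, $(ba)^*=ba$; such $b$ is unique, denoted $a^{\dagger}$, and $R^{\dagger}$ is the set of such $a$. An element $a$ is group invertible if there is $b$ with $aba=a$, $bab=b$, $ab=ba$; such $b$ is unique, denoted $a^{\#}$, and $R^{\#}$ is the set of such $a$. For $a\in R^{\#}\cap R^{\dagger}$, $a$ is SEP if $a^*=a^{\dagger}=a^{\#}$; $R^{SEP}$ denotes the set of SEP elements. For $e,c\in R$, $e$ is a right $c$-idempotent if $e^2=ec$. *)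

(* Defs.v *)
From mathcomp Require Import all_boot all_algebra.
Set Implicit Arguments. Unset Strict Implicit. Unset Printing Implicit Defensive.
Import GRing.Theory.
Local Open Scope ring_scope.

Definition involution (R : ringType) (star : R -> R) : Prop :=
  [/\ forall x, star (star x) = x,
      forall x y, star (x + y) = star x + star y &
      forall x y, star (x * y) = star y * star x].

Definition is_MP_inverse (R : ringType) (star : R -> R) (a b : R) : Prop :=
  [/\ a * b * a = a, b * a * b = b, star (a * b) = a * b & star (b * a) = b * a].

Definition is_group_inverse (R : ringType) (a b : R) : Prop :=
  [/\ a * b * a = a, b * a * b = b & a * b = b * a].

(* a is SEP: a^* = a^dagger = a^#, where adag and asharp are the
   (unique) MP and group inverses of a. *)
Definition is_SEP (R : ringType) (star : R -> R) (a adag asharp : R) : Prop :=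
  star a = adag /\ adag = asharp.

Definition right_idempotent (R : ringType) (c e : R) : Prop := e * e = e * c.

(* Main.v *)
Require Import Defs.
From mathcomp Require Import all_boot all_algebra.
Import GRing.Theory.
Local Open Scope ring_scope.

Theorem theorem3p5 (R : ringType) (star : R -> R) (a asharp adag : R) :
  involution star ->
  is_group_inverse a asharp ->
  is_MP_inverse star a adag ->
  is_SEP star a adag asharp <->
  right_idempotent a (a * star asharp * adag).
Proof.
move=> [sK sD sM] [Ga Gg Gc] [Da Dd Hp Hq].
set g := asharp in Ga Gg Gc *; set d := adag in Da Dd Hp Hq *.
set s := star in sK sD sM Hp Hq *.
have gaa : g * a * a = a by rewrite -Gc Ga.
have ggag : g * g * a = g by rewrite -mulrA -Gc mulrA Gg.
have aggg : a * (g * g) = g by rewrite mulrA Gc Gg.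
split.
  move=> [sa dg]; rewrite /right_idempotent.
  have -> : s g = a by rewrite -dg -sa sK.
  have -> : a * a * d = a by rewrite dg -mulrA Gc mulrA Ga.
  by [].
rewrite /right_idempotent => EE.
have F1 : s a = s a * (a * d) by rewrite -[in RHS]Hp -sM Da.
have F2 : s a = d * a * s a by rewrite -[in RHS]Hq -sM mulrA Da.
have F3 : s g = s a * (s g * s g) by rewrite -sM -sM ggag.
have F4 : s g = (s g * s g) * s a by rewrite -sM -sM aggg.
have F5 : s g = d * a * s g by rewrite {1}F3 {1}F2 -!mulrA -F3.
have F6 : s g = s g * (a * d) by rewrite {1}F4 {1}F1 !mulrA -F4.
have H1 : s g * s g * d = s g * d * a.
  have := congr1 (fun x => d * x) EE.
  have F5' x : d * (a * (s g * x)) = s g * x by rewrite !mulrA -F5.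
  by rewrite -!mulrA !F5' !mulrA.
have H2 : s d * g * g = d * a * g.
  have := congr1 s H1; rewrite -(mulrA (s g) d a) !sM !sK. by rewrite -sM Hq mulrA.
have H3 : s d * g = d * a.
  have ggag' : g * (g * a) = g by rewrite mulrA ggag.
  by have := congr1 (fun x => x * a) H2; rewrite /= -!mulrA ggag' (mulrA a g a) Ga.
have H4 : s g * d = d * a by rewrite -Hq -H3 sM sK.
have H5 : a * s g * d = a by rewrite -mulrA H4 mulrA Da.
have H6 : d = d * s d * s a by rewrite -mulrA -sM Hp mulrA Dd.
have E' : a * s g * d * s d * s a = a by rewrite -(mulrA _ d (s d)) -(mulrA _ (d * s d)) -H6 H5.
have H7 : a = a * (a * d).
  by rewrite -{1}E' F1 !mulrA E'.
have H8 : g * a = a * d by rewrite {1}H7 !mulrA gaa.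
have Hd : d = d * a * g by rewrite -{1}Dd -mulrA -H8 -Gc mulrA.
have Hh : s (g * a) = g * a by rewrite H8 Hp.
have Hga : g * a = d * a * (g * a).
  by rewrite -{1}Hh sM F2 -(mulrA (d * a)) -sM Hh.
have Hg : g = d * a * g by rewrite -{1}Gg Hga -(mulrA (d * a)) Gg.
have dg : d = g by rewrite Hd -Hg.
have H4' := H4; rewrite dg in H4'.
split => //.
by rewrite dg F1 -H8 -H4' mulrA -sM Hh Gg.
Qed.
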